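(* Let $s$ be a positive integer, let $\lambda_0 \geq 0 > \lambda_1$ be real numbers and let $z_1, \ldots, z_{2s}$ be complex numbers with $z_j = a_j + b_j i$, $a_j \in \mathbb{R}$, $b_j > 0$ for $j = 1, \ldots, 2s$. If $\lambda_0 + \lambda_1 - 2\sum_{j=1}^{2s} |z_j| \geq 0$, then there is a $(4s+2) \times (4s+2)$ normal centrosymmetric nonnegative matrix with eigenvalues $\lambda_0, \lambda_1, z_1, \ldots, z_{2s}, \overline{z}_1, \ldots, \overline{z}_{2s}$.
   Context: $J$ denotes the reverse identity matrix of the appropriate size (ones on the anti-diagonal, zeros elsewhere). A square matrix $Q$ is centrosymmetric if $JQJ = Q$, nonnegative if all entries are nonnegative, and normal if $QQ^* = Q^*Q$. *)

(* Defs.v *)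
From HB Require Import structures.
From mathcomp Require Import all_boot all_order all_algebra.
From mathcomp Require Import reals.
From mathcomp.real_closed Require Import complex.
Set Implicit Arguments. Unset Strict Implicit. Unset Printing Implicit Defensive.
Import Order.TTheory GRing.Theory Num.Theory.
Local Open Scope ring_scope.

Definition revid (R : pzRingType) (n : nat) : 'M[R]_n :=
  \matrix_(i < n, j < n) ((i + j)%N == n.-1)%:R.

Definition centrosymmetric (R : pzRingType) (n : nat) (Q : 'M[R]_n) : Prop :=
  revid R n *m Q *m revid R n = Q.

Definition nonneg_mx (R : numDomainType) (m n : nat) (Q : 'M[R]_(m, n)) : Prop :=
  forall i j, 0 <= Q i j.

(* for a real matrix, Q^* is the transpose *)
Definition normal_real_mx (R : pzRingType) (n : nat) (Q : 'M[R]_n) : Prop :=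
  Q *m Q^T = Q^T *m Q.

(* the spectrum (with multiplicities) of a real matrix, viewed over R[i],
   is the multiset s : char_poly equals prod (X - x) *)
Definition has_spectrum (R : rcfType) (n : nat) (Q : 'M[R]_n) (s : seq R[i]) : Prop :=
  char_poly (map_mx (real_complex R) Q) = \prod_(x <- s) ('X - x%:P).

(* Main.v *)
From HB Require Import structures.
Require Import Defs.
From mathcomp Require Import all_boot all_order all_algebra all_solvable all_field.
From mathcomp Require Import reals ring lra zify.
From mathcomp.real_closed Require Import complex.
Set Implicit Arguments. Unset Strict Implicit. Unset Printing Implicit Defensive.
Import Order.TTheory GRing.Theory Num.Theory.
Local Open Scope ring_scope.

Section Prim.
Variable R : rcfType.
Lemma Cprim_root_exists n : (n > 0)%N -> {z : R[i] | n.-primitive_root z}.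
Proof.
pose p : {poly R[i]} := 'X^n - 1; have [r Dp] := closed_field_poly_normal p.
move=> n_gt0; apply/sigW; rewrite (monicP _) ?monicXnsubC // scale1r in Dp.
have rn1: all n.-unity_root r by apply/allP=> z; rewrite -root_prod_XsubC -Dp.
have sz_r: (n < (size r).+1)%N.
  by rewrite -(size_prod_XsubC r id) -Dp size_XnsubC.
have [|z] := hasP (has_prim_root n_gt0 rn1 _ sz_r); last by exists z.
by rewrite -separable_prod_XsubC -Dp separable_Xn_sub_1 // pnatr_eq0 -lt0n.
Qed.

Lemma geom_sum (n : nat) (x : R[i]) : x ^+ n = 1 ->
  \sum_(k < n) x ^+ k = if x == 1 then n%:R else 0.
Proof.
move=> xn; case: eqP => [->|/eqP x1].
  by under eq_bigr do rewrite expr1n; rewrite sumr_const card_ord.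
have : (x - 1) * \sum_(k < n) x ^+ k = 0 by rewrite -subrX1 xn subrr.
by move/eqP; rewrite mulf_eq0 subr_eq0 (negPf x1) => /eqP.
Qed.
End Prim.

Section Rev.
Variable R : rcfType.

Lemma revid_mull n (A : 'M[R]_n) i j : (revid R n *m A) i j = A (rev_ord i) j.
Proof.
rewrite mxE (bigD1 (rev_ord i)) //= big1 ?addr0.
  rewrite mxE /=; have -> : (i + (n - i.+1))%N == n.-1 by apply/eqP; have := ltn_ord i; lia.
  by rewrite mul1r.
move=> k /eqP nk; rewrite mxE; case: eqP => [h|]; last by rewrite mul0r.
by case: nk; apply: val_inj => /=; have := ltn_ord i; have := ltn_ord k; lia.
Qed.

Lemma revid_mulr n (A : 'M[R]_n) i j : (A *m revid R n) i j = A i (rev_ord j).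
Proof.
rewrite mxE (bigD1 (rev_ord j)) //= big1 ?addr0.
  rewrite mxE /=; have -> : ((n - j.+1) + j)%N == n.-1 by apply/eqP; have := ltn_ord j; lia.
  by rewrite mulr1.
move=> k /eqP nk; rewrite mxE; case: eqP => [h|]; last by rewrite mulr0.
by case: nk; apply: val_inj => /=; have := ltn_ord j; have := ltn_ord k; lia.
Qed.
End Rev.
Section Gen.
Variable R : rcfType.
Local Notation C := (R[i]).
Variables (n : nat) (w : C) (mu : nat -> C) (f sg tau : nat -> nat).
Hypothesis hw : n.-primitive_root w.
Hypothesis hf : forall t, (t < n)%N -> (f t < n)%N.
Hypothesis hfi : forall t t', (t < n)%N -> (t' < n)%N -> f t = f t' -> t = t'.
Hypothesis hs : forall a, (a < n)%N -> (sg a < n)%N.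
Hypothesis hsi : forall a b, (a < n)%N -> (b < n)%N -> sg a = sg b -> a = b.
Hypothesis ht : forall t, (t < n)%N -> (tau t < n)%N.
Hypothesis hti : forall t, (t < n)%N -> tau (tau t) = t.
Hypothesis htmu : forall t, (t < n)%N -> mu (tau t) = conjc (mu t).
Hypothesis htf : forall t, (t < n)%N -> (n %| f t + f (tau t))%N.

Let iw := w^-1.
Let n_gt0 : (0 < n)%N. Proof. exact: prim_order_gt0 hw. Qed.
Let w_neq0 : w != 0. Proof. by rewrite (prim_root_eq0 hw) -lt0n n_gt0. Qed.
Let wn : w ^+ n = 1. Proof. exact: prim_expr_order. Qed.
Let iwn : iw ^+ n = 1. Proof. by rewrite /iw exprVn wn invr1. Qed.
Let nR_neq0 : n%:R != 0 :> C. Proof. by rewrite pnatr_eq0 -lt0n n_gt0. Qed.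

Definition sgo (a : 'I_n) : 'I_n := insubd a (sg a).
Definition tauo (a : 'I_n) : 'I_n := insubd a (tau a).
Lemma sgoE a : val (sgo a) = sg a. Proof. by rewrite val_insubd hs. Qed.
Lemma tauoE a : val (tauo a) = tau a. Proof. by rewrite val_insubd ht. Qed.

Lemma sum_sg (g : nat -> C) : \sum_(a < n) g (sg a) = \sum_(a < n) g a.
Proof.
rewrite [RHS](reindex_inj (h := sgo)); first by apply: eq_bigr => a _; rewrite sgoE.
by move=> a b /(congr1 val); rewrite !sgoE => /hsi h; apply/val_inj/h.
Qed.

Lemma sum_tau (g : nat -> C) : \sum_(a < n) g (tau a) = \sum_(a < n) g a.
Proof.
rewrite [RHS](reindex_inj (h := tauo)); first by apply: eq_bigr => a _; rewrite tauoE.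
move=> a b /(congr1 val); rewrite !tauoE => h; apply/val_inj.
by have := congr1 tau h; rewrite !hti.
Qed.

Lemma iwE k : iw ^+ k = (w ^+ k)^-1. Proof. by rewrite /iw exprVn. Qed.

Lemma key t t' : (t < n)%N -> (t' < n)%N ->
  \sum_(a < n) (iw ^+ f t * w ^+ f t') ^+ sg a = if t == t' then n%:R else 0.
Proof.
move=> tn t'n; rewrite (sum_sg (fun k => (iw ^+ f t * w ^+ f t') ^+ k)) geom_sum.
  have -> : (iw ^+ f t * w ^+ f t' == 1) = (t == t').
    have wne : w ^+ f t != 0 by rewrite expf_neq0.
    have -> : (iw ^+ f t * w ^+ f t' == 1) = (w ^+ f t' == w ^+ f t).
      rewrite iwE mulrC; apply/eqP/eqP => [h|->]; last by rewrite divff.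
      by rewrite -(divfK wne (w ^+ f t')) h mul1r.
    rewrite (eq_prim_root_expr hw) !modn_small ?hf //.
    by apply/eqP/eqP => [h|->] //; exact: (hfi tn t'n (esym h)).
  by [].
by rewrite exprMn -!exprM mulnC exprM iwn mulnC exprM wn !expr1n mulr1.
Qed.

Definition Fm : 'M[C]_n := \matrix_(a, t) w ^+ (sg a * f t).
Definition Gm : 'M[C]_n := \matrix_(t, b) iw ^+ (f t * sg b).
Definition Dm : 'M[C]_n := diag_mx (\row_(t < n) mu t).
Definition cC (k : nat) : C := n%:R^-1 * \sum_(t < n) mu t * iw ^+ (f t * k).
Definition QC : 'M[C]_n := \matrix_(a, b) cC (sg b + n - sg a).

Lemma GF : Gm *m Fm = n%:R%:M.
Proof.
apply/matrixP => t t'; rewrite !mxE.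
under eq_bigr do rewrite !mxE [(sg _ * _)%N]mulnC !exprM -exprMn.
by rewrite key // -(inj_eq val_inj); case: eqP.
Qed.

Lemma iw_sub k : (k <= n)%N -> iw ^+ (n - k) = w ^+ k.
Proof.
move=> kn; have ne : iw ^+ k != 0 by rewrite expf_neq0 // invr_eq0.
apply: (mulIf ne); rewrite -exprD subnK // iwn iwE mulfV //.
by rewrite expf_neq0.
Qed.

Lemma QF : QC *m Fm = Fm *m Dm.
Proof.
apply/matrixP => a t'; rewrite mul_mx_diag !mxE.
have ha := hs (ltn_ord a).
transitivity (\sum_(b < n) \sum_(t < n) n%:R^-1 * (mu t * w ^+ (f t * sg a)) *
   (iw ^+ f t * w ^+ f t') ^+ sg b).
  apply: eq_bigr => b _; rewrite !mxE /cC -mulrA big_distrl mulr_sumr.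
  apply: eq_bigr => t _ /=.
  rewrite -addnBA ?(ltnW ha) // mulnDr exprD.
  rewrite [(f t * (n - _))%N]mulnC [iw ^+ ((n - _) * _)]exprM iw_sub ?(ltnW ha) //.
  rewrite -exprM.
  rewrite [(sg b * _)%N]mulnC [(sg a * _)%N]mulnC !exprM exprMn; ring.
rewrite exchange_big /=.
under eq_bigr => t _ do rewrite -mulr_sumr key //.
rewrite (bigD1 t') //= eqxx big1 => [|t /negbTE]; last first.
  by rewrite -(inj_eq val_inj) => -> /=; rewrite mulr0.
by rewrite addr0 mulnC mulrC mulrA mulfV // mul1r mulrC.
Qed.

Definition Hm : 'M[C]_n := n%:R^-1 *: Gm.
Lemma HF : Hm *m Fm = 1%:M.
Proof. by rewrite /Hm -scalemxAl GF scale_scalar_mx mulVf. Qed.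
Lemma FH : Fm *m Hm = 1%:M.
Proof. exact: mulmx1C HF. Qed.
Lemma QCE : QC = Fm *m Dm *m Hm.
Proof. by rewrite -QF -mulmxA FH mulmx1. Qed.

Lemma char_poly_sim m (P A B : 'M[C]_m) : B *m P = 1%:M ->
  char_poly (P *m A *m B) = char_poly A.
Proof.
move=> BP; have PB := mulmx1C BP.
have e : char_poly_mx (P *m A *m B) =
   map_mx polyC P *m char_poly_mx A *m map_mx polyC B.
  rewrite /char_poly_mx mulmxBr mulmxBl -!map_mxM mul_mx_scalar -scalemxAl.
  by rewrite -map_mxM PB map_mx1 scalemx1.
rewrite /char_poly e !det_mulmx mulrC mulrA -det_mulmx -map_mxM BP map_mx1.
by rewrite det1 mul1r.
Qed.

Lemma char_QC : char_poly QC = \prod_(t < n) ('X - (mu t)%:P).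
Proof.
rewrite QCE char_poly_sim ?HF // char_poly_trig ?diag_mx_is_trig //.
by apply: eq_bigr => t _; rewrite !mxE eqxx mulr1n.
Qed.

Local Notation cj := (@conjc R).
Lemma normw : `|w| = 1.
Proof.
apply/eqP; rewrite -(pexpr_eq1 n_gt0) ?normr_ge0 //.
by rewrite -normrX wn normr1.
Qed.

Lemma conj_w : cj w = iw.
Proof.
have n1 := normw.
have : w * cj w = 1 by rewrite -sqr_normc n1 expr1n.
by move=> h; rewrite /iw -[cj w](mulKf w_neq0) h mulr1.
Qed.

Lemma conj_iw : cj iw = w.
Proof. by rewrite /iw conjc_inv conj_w /iw invrK. Qed.

Lemma GmE : Gm = (map_mx cj Fm)^T.
Proof. by apply/matrixP => t b; rewrite !mxE rmorphXn /= conj_w mulnC. Qed.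

Lemma cC_real k : cj (cC k) = cC k.
Proof.
rewrite /cC rmorphM /= conjc_inv rmorph_nat rmorph_sum; congr (_ * _).
rewrite -(sum_tau (fun t => mu t * iw ^+ (f t * k))).
apply: eq_bigr => t _; rewrite rmorphM htmu // rmorphXn /= conj_iw; congr (_ * _).
have [q hq] := dvdnP (htf (ltn_ord t)).
apply: (mulIf (_ : iw ^+ (f t * k) != 0)); first by rewrite expf_neq0 // invr_eq0.
rewrite -exprD -mulnDl addnC hq iwE mulfV ?expf_neq0 //.
by rewrite mulnAC mulnC exprM iwn expr1n.
Qed.

Lemma cC_per k : cC (k + n) = cC k.
Proof.
rewrite /cC; congr (_ * _); apply: eq_bigr => t _.
by rewrite mulnDr exprD [(_ * n)%N]mulnC [iw ^+ (n * _)]exprM iwn expr1n mulr1.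
Qed.

Lemma QC_real : map_mx cj QC = QC.
Proof. by apply/matrixP => a b; rewrite !mxE cC_real. Qed.

Definition Dc : 'M[C]_n := diag_mx (\row_(t < n) cj (mu t)).

Lemma QCT : QC^T = Fm *m Dc *m Hm.
Proof.
rewrite -QC_real QCE !map_mxM !trmx_mul -GmE.
have -> : (map_mx cj Hm)^T = n%:R^-1 *: Fm.
  apply/matrixP => a b; rewrite !mxE rmorphM /= conjc_inv conjc_nat.
  by rewrite rmorphXn /= conj_iw mulnC.
have -> : (map_mx cj Dm)^T = Dc.
  apply/matrixP => i j; rewrite !mxE; case: (eqVneq i j) => [->|ne].
    by rewrite !mulr1n.
  by rewrite !mulr0n conjc0.
by rewrite /Hm -scalemxAr mulmxA !scalemxAl.
Qed.

Lemma diag_comm : Dm *m Dc = Dc *m Dm.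
Proof.
apply/matrixP => i j; rewrite !mul_diag_mx !mxE.
by case: eqP => _; rewrite ?mulr1n ?mulr0n ?mulr0 // mulrC.
Qed.

Lemma QC_normal : QC *m QC^T = QC^T *m QC.
Proof.
have h X Y : Fm *m X *m Hm *m (Fm *m Y *m Hm) = Fm *m (X *m Y) *m Hm.
  by rewrite !mulmxA -[Fm *m X *m Hm *m Fm]mulmxA HF mulmx1 -!mulmxA.
by rewrite QCT QCE !h diag_comm.
Qed.



Definition Qr : 'M[R]_n := \matrix_(a, b) complex.Re (cC (sg b + n - sg a)).

Lemma mapQ : map_mx (real_complex R) Qr = QC.
Proof.
apply/matrixP => a b; rewrite !mxE; have := cC_real (sg b + n - sg a).
case: (cC _) => x y /= [] h; rewrite /real_complex_def; congr Complex; lra.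
Qed.

Lemma Qr_normal : Qr *m Qr^T = Qr^T *m Qr.
Proof.
apply: (map_mx_inj (f := real_complex R)).
by rewrite !map_mxM -map_trmx mapQ QC_normal.
Qed.

Lemma Qr_spec : char_poly (map_mx (real_complex R) Qr) = \prod_(t < n) ('X - (mu t)%:P).
Proof. by rewrite mapQ char_QC. Qed.


Lemma ReD (x y : C) : complex.Re (x + y) = complex.Re x + complex.Re y.
Proof. by case: x; case: y. Qed.

Lemma ReM (r : R) (x : C) : complex.Re (real_complex R r * x) = r * complex.Re x.
Proof. by case: x => a b /=; rewrite mul0r subr0. Qed.

Lemma nRinv : (n%:R^-1 : C) = real_complex R (n%:R^-1 : R).
Proof. by rewrite fmorphV rmorph_nat. Qed.

Lemma Qr_ge0 a b : f 0 = 0 ->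
  (forall u : nat -> C, (forall t, `|u t| = 1) -> u 0 = 1 ->
      0 <= \sum_(t < n) complex.Re (mu t * u t)) -> 0 <= Qr a b.
Proof.
move=> f0 H; rewrite mxE /cC nRinv ReM; apply: mulr_ge0.
  by rewrite invr_ge0 ler0n.
rewrite (big_morph _ ReD (erefl (complex.Re (0 : C)))).
apply: (H (fun t => iw ^+ (f t * _))) => [t|]; last by rewrite f0 mul0n expr0.
by rewrite normrX /iw normfV normw invr1 expr1n.
Qed.


Lemma Qr_centro :
  (forall a b, (a < n)%N -> (b < n)%N ->
     let k1 := (sg (n - b.+1) + n - sg (n - a.+1))%N in
     let k2 := (sg b + n - sg a)%N in
     k1 = k2 \/ k1 = (k2 + n)%N \/ k2 = (k1 + n)%N) ->
  centrosymmetric Qr.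
Proof.
move=> H; apply/matrixP => a b; rewrite revid_mulr revid_mull !mxE /=.
have [e|[e|e]] := H a b (ltn_ord a) (ltn_ord b).
- by rewrite e.
- by rewrite e cC_per.
- by rewrite e cC_per.
Qed.

End Gen.

Lemma normcE (R : rcfType) (x : R[i]) : `|x| = real_complex R (Normc.normc x).
Proof. by case: x => a b; rewrite normc_def. Qed.

Lemma normc_conj (R : rcfType) (x : R[i]) : Normc.normc (conjc x) = Normc.normc x.
Proof. by case: x => a b /=; rewrite sqrrN. Qed.

Lemma normc_ge_abs (R : rcfType) (a b : R) : `|a| <= Num.sqrt (a ^+ 2 + b ^+ 2).
Proof. by rewrite -sqrtr_sqr ler_sqrt ?addr_ge0 ?sqr_ge0 // lerDl sqr_ge0. Qed.

Lemma Re_ge (R : rcfType) (x : R[i]) : - Normc.normc x <= complex.Re x.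
Proof.
case: x => a b /=; rewrite lerNl; apply: le_trans (normc_ge_abs a b).
by rewrite -normrN ler_norm.
Qed.

Lemma Re_le (R : rcfType) (x : R[i]) : complex.Re x <= Normc.normc x.
Proof. by case: x => a b /=; apply: le_trans (normc_ge_abs a b); rewrite ler_norm. Qed.

Theorem theorem3p10 (R : realType) (s : nat) (l0 l1 : R) (z : 'I_(2 * s) -> R[i]) :
  (0 < s)%N -> 0 <= l0 -> l1 < 0 ->
  (forall j, 0 < complex.Im (z j)) ->
  0 <= l0 + l1 - 2 * \sum_(j < 2 * s) ComplexField.Normc.normc (z j) ->
  exists Q : 'M[R]_(4 * s + 2),
    [/\ normal_real_mx Q, centrosymmetric Q, nonneg_mx Q &
        has_spectrum Q ((real_complex R l0) :: (real_complex R l1) ::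
          ([seq z j | j <- enum 'I_(2 * s)] ++ [seq conjc (z j) | j <- enum 'I_(2 * s)]))].
Proof.
move=> s0 l00 l10 _ hsum.
set n := (4 * s + 2)%N.
set m := (2 * s)%N.
set Z := [seq z j | j <- enum 'I_(2 * s)].
have e : [seq conjc (z j) | j <- enum 'I_m] = map conjc Z.
  by rewrite /Z; elim: (enum _) => //= x l ->.
rewrite e.
set L := _ :: _ :: _.
have sZ : size Z = m by rewrite size_map size_enum_ord.
have sL : size L = n by rewrite /= size_cat size_map sZ /n /m; lia.
pose mu t := nth 0 L t.
pose f t := if t == 0%N then 0%N else if t == 1%N then m.+1 else
   if (t < m + 2)%N then (t - 1)%N else (3 * m + 3 - t)%N.
pose tau t := if (t < 2)%N then t else if (t < m + 2)%N then (t + m)%N else (t - m)%N.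
pose sg a := if (a < m.+1)%N then a else (n - 1 - a + m.+1)%N.
have n0 : (0 < n)%N by rewrite /n; lia.
have [w hw] := @Cprim_root_exists R n n0.
have hf : forall t, (t < n)%N -> (f t < n)%N.
  move=> t; rewrite /f /n /m; repeat case: ifP; lia.
have hfi : forall t t', (t < n)%N -> (t' < n)%N -> f t = f t' -> t = t'.
  move=> t t'; rewrite /f /n /m; repeat case: ifP; lia.
have hs : forall a, (a < n)%N -> (sg a < n)%N.
  move=> a; rewrite /sg /n /m; repeat case: ifP; lia.
have hsi : forall a b, (a < n)%N -> (b < n)%N -> sg a = sg b -> a = b.
  move=> a b; rewrite /sg /n /m; repeat case: ifP; lia.
have ht : forall t, (t < n)%N -> (tau t < n)%N.
  move=> t; rewrite /tau /n /m; repeat case: ifP; lia.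
have hti : forall t, (t < n)%N -> tau (tau t) = t.
  move=> t; rewrite /tau /n /m; repeat case: ifP; lia.
have htf : forall t, (t < n)%N -> (n %| f t + f (tau t))%N.
  move=> t tn; have : (f t + f (tau t) = 0 \/ f t + f (tau t) = n)%N.
    move: tn; rewrite /f /tau /n /m; repeat case: ifP; lia.
  by case=> ->; rewrite ?dvdn0 ?dvdnn.
have htmu : forall t, (t < n)%N -> mu (tau t) = conjc (mu t).
  move=> t; rewrite /mu /tau; case: t => [|[|j]] tn /=; try by apply/eqP; rewrite eq_complex /= oppr0 !eqxx.
  have jm : (j < m + m)%N by move: tn; rewrite /n /m; lia.
  case: ifP => hj.
    have -> : (j.+2 + m = (j + m).+2)%N by lia.
    rewrite /= !nth_cat sZ ltnNge leq_addl /= addnK.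
    have jm' : (j < m)%N by lia.
    by rewrite jm' (nth_map 0) // sZ.
  have -> : (j.+2 - m = (j - m).+2)%N by lia.
  rewrite /= !nth_cat sZ (ltnNge j) (_ : (m <= j)%N) /=; last by lia.
  have -> : (j - m < m)%N by lia.
  by rewrite (nth_map 0) ?sZ ?conjcK //; lia.
exists (Qr n w mu f sg); split.
- exact: (Qr_normal hw hf hfi hs hsi ht hti htmu htf).
- apply: (Qr_centro mu f hw) => a b an bn /=.
  move: an bn; rewrite /sg /n /m; repeat case: ifP; lia.
- move=> a b; apply: (Qr_ge0 sg hw) => // u hu u0.
  have hn t : Normc.normc (u t) = 1 by move: (hu t); rewrite normcE; case.
  rewrite -(big_mkord xpredT (fun t => complex.Re (mu t * u t))).
  have n1 : (1 < n)%N by rewrite /n; lia.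
  rewrite big_ltn ?(ltnW n1) // big_ltn //.
  have -> : complex.Re (mu 0%N * u 0%N) = l0 by rewrite u0 mulr1.
  have h1 : l1 <= complex.Re (mu 1%N * u 1%N).
    rewrite /mu /= ReM; have := Re_le (u 1%N); rewrite hn => h; nra.
  have h2 : - \sum_(2 <= t < n) Normc.normc (mu t) <= \sum_(2 <= t < n) complex.Re (mu t * u t).
    rewrite -sumrN; apply: ler_sum => t _; have := Re_ge (mu t * u t).
    by rewrite Normc.normcM hn mulr1.
  have e2 : \sum_(2 <= t < n) Normc.normc (mu t) = \sum_(x <- Z ++ map conjc Z) Normc.normc x.
    rewrite [RHS](big_nth 0) size_cat sZ size_map sZ -{1}[2%N]add0n big_addn.
    have -> : (n - 2 = m + m)%N by rewrite /n /m; lia.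
    by apply: eq_big_nat => i _; rewrite addn2.
  have e3 : \sum_(x <- Z ++ map conjc Z) Normc.normc x = 2 * \sum_(j < 2 * s) Normc.normc (z j).
    rewrite big_cat [X in _ + X = _]big_map /=.
    under [X in _ + X = _]eq_bigr do rewrite normc_conj.
    by rewrite /Z big_map big_enum /= mulr2n mulrDl mul1r.
  move: hsum; rewrite -e3 -e2; lra.
- rewrite /has_spectrum (Qr_spec hw hf hfi hs hsi ht hti htmu htf) (big_nth 0) sL big_mkord.
  by [].
Qed.
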